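(* Let $(\Omega,\mathcal{A},\mathbb{P})$ be a probability space and let $\mathcal{X}:\Omega\to\mathcal{F}_c(\mathbb{R})$ be a fuzzy random variable (no integrability assumption). Then for every support median $A\in\mathrm{Med}_s(\mathcal{X})$ and every $\alpha\in[0,1]$ we have $A_\alpha\subseteq(\mathrm{med}_{Gr}(\mathcal{X}))_\alpha$.
   Context: For a function $A:\mathbb{R}\to[0,1]$, its $\alpha$-levels are $A_\alpha=\{x: A(x)\ge\alpha\}$ for $\alpha\in(0,1]$ and $A_0$ is the closure of $\{x:A(x)>0\}$. $\mathcal{F}_c(\mathbb{R})$ is the set of such $A$ all of whose $\alpha$-levels are non-empty compact intervals. The support function of $A\in\mathcal{F}_c(\mathbb{R})$ is $s_A(u,\alpha)=\sup\{u v: v\in A_\alpha\}$ for $u\in\mathbb{S}^0=\{-1,1\}$, $\alpha\in[0,1]$; thus $A_\alpha=[-s_A(-1,\alpha),s_A(1,\alpha)]$. A fuzzy random variable is a map $\mathcal{X}:\Omega\to\mathcal{F}_c(\mathbb{R})$ such that for each $\alpha\in[0,1]$ the map $\omega\mapsto\mathcal{X}(\omega)_\alpha$ is a random compact set (i.e. $\{\omega:\mathcal{X}(\omega)_\alpha\cap K\neq\emptyset\}\in\mathcal{A}$ for every non-empty compact convex $K$); then $s_{\mathcal{X}}(u,\alpha)(\omega)=s_{\mathcal{X}(\omega)}(u,\alpha)$ is a real random variable. For a real random variable $X$, $\mathrm{Med}(X)=[\underline{\mathrm{med}}(X),\overline{\mathrm{med}}(X)]$ denotes the (closed interval) set of all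 medians of $X$. A support median of $\mathcal{X}$ is any $A\in\mathcal{F}_c(\mathbb{R})$ with $s_A(u,\alpha)\in\mathrm{Med}(s_{\mathcal{X}}(u,\alpha))$ for all $u\in\{-1,1\}$, $\alpha\in[0,1]$; their set is $\mathrm{Med}_s(\mathcal{X})$. The Grzegorzewski median $\mathrm{med}_{Gr}(\mathcal{X})$ is the fuzzy number with membership function $\mathrm{med}_{Gr}(\mathcal{X})(t)=\sup\{\inf_{\omega\in\Omega}\mathcal{X}(\omega)(X(\omega)) : X:\Omega\to\mathbb{R}\text{ Borel measurable},\ t\in\mathrm{Med}(X)\}$; it is known that it is the unique fuzzy number with $(\mathrm{med}_{Gr}(\mathcal{X}))_\alpha=[\underline{\mathrm{med}}(\inf\mathcal{X}_\alpha),\overline{\mathrm{med}}(\sup\mathcal{X}_\alpha)]$ for every $\alpha\in[0,1]$, where $\inf\mathcal{X}_\alpha$ and $\sup\mathcal{X}_\alpha$ denote the real random variables $\omega\mapsto\inf\mathcal{X}(\omega)_\alpha$ and $\omega\mapsto\sup\mathcal{X}(\omega)_\alpha$. *)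

(* Defs.v *)
From HB Require Import structures.
From mathcomp Require Import all_boot all_order all_algebra.
From mathcomp Require Import all_classical all_reals all_analysis.
Set Implicit Arguments. Unset Strict Implicit. Unset Printing Implicit Defensive.
Import Order.TTheory GRing.Theory Num.Theory.
Import numFieldNormedType.Exports.
Local Open Scope classical_set_scope.
Local Open Scope ring_scope.

Section Fuzzy.
Context {R : realType}.

Definition level (A : R -> R) (a : R) : set R :=
  if a == 0 then closure [set x | 0 < A x] else [set x | a <= A x].

Definition is_Fc (A : R -> R) : Prop :=
  (forall x, 0 <= A x <= 1) /\
  (forall a, 0 <= a <= 1 -> exists l r : R, l <= r /\ level A a = `[l, r]%classic).

Definition suppf (A : R -> R) (u a : R) : R := sup [set u * v | v in level A a].

Context {d : measure_display} {T : measurableType d}.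

Definition is_FRV (X : T -> R -> R) : Prop :=
  (forall w, is_Fc (X w)) /\
  (forall a, 0 <= a <= 1 -> forall l r : R, l <= r ->
     measurable [set w | level (X w) a `&` `[l, r]%classic !=set0]).

Definition Med (P : probability T R) (Y : T -> R) : set R :=
  [set m | ((2^-1 : R)%:E <= P [set w | (Y w <= m)%R])%E /\
           ((2^-1 : R)%:E <= P [set w | (m <= Y w)%R])%E].

Definition Med_s (P : probability T R) (X : T -> R -> R) : set (R -> R) :=
  [set A | is_Fc A /\ forall u a, (u = -1 \/ u = 1) -> 0 <= a <= 1 ->
       Med P (fun w => suppf (X w) u a) (suppf A u a)].

Definition medGr (P : probability T R) (X : T -> R -> R) : R -> R :=
  fun t => sup [set r | exists Y : T -> R,
     [/\ measurable_fun setT Y, Med P Y t & r = inf (range (fun w => X w (Y w)))]].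

End Fuzzy.

(* Main.v *)
Require Import Defs.
From HB Require Import structures.
From mathcomp Require Import all_boot all_order all_algebra.
From mathcomp Require Import all_classical all_reals all_analysis.
From mathcomp Require Import lra.
Import Order.TTheory GRing.Theory Num.Theory.
Local Open Scope classical_set_scope.
Local Open Scope ring_scope.

Lemma sup_max_eq (R : realType) (S : set R) m : S m -> ubound S m -> sup S = m.
Proof.
move=> Sm ub; apply/le_anti/andP; split.
  by apply: ge_sup => //; exists m.
by apply: ub_le_sup => //; exists m.
Qed.

Lemma suppf_itv (R : realType) (A : R -> R) a l r :
  level A a = `[l, r]%classic -> l <= r ->
  suppf A 1 a = r /\ suppf A (-1) a = - l.
Proof.
move=> hA lr; rewrite /suppf hA; split.
  apply: sup_max_eq.
    by exists r; rewrite /= ?in_itv /= ?lr ?lexx // mul1r.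
  by move=> y [v]; rewrite /= in_itv /= => /andP[_ vr] <-; rewrite mul1r.
apply: sup_max_eq.
  by exists l; rewrite /= ?in_itv /= ?lr ?lexx // mulN1r.
by move=> y [v]; rewrite /= in_itv /= => /andP[lv _] <-; rewrite mulN1r lerN2.
Qed.

Arguments suppf_itv {R A a l r}.

Lemma meas_ge (R : realType) (d : measure_display) (T : measurableType d) (f : T -> R) :
  (forall c, measurable [set w | c <= f w]) -> measurable_fun setT f.
Proof.
move=> h; apply: (measurability _ (measurable_realfun.RGenCInfty.measurableE R)) => //.
move=> _ [_ [x ->] <-]; rewrite setTI.
rewrite [X in measurable X](_ : _ = [set w | x <= f w]) //.
by apply/seteqP; split => w /=; rewrite in_itv /= andbT.
Qed.

Lemma meas_le_set (R : realType) (d : measure_display) (T : measurableType d) (f : T -> R) c :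
  measurable_fun setT f -> measurable [set w | f w <= c].
Proof.
move=> mf; have := mf measurableT `]-oo, c]%classic (measurable_itv _).
rewrite setTI; congr measurable; try by apply/seteqP; split => w /=; rewrite in_itv /=.
Qed.

Lemma meas_ge_set (R : realType) (d : measure_display) (T : measurableType d) (f : T -> R) c :
  measurable_fun setT f -> measurable [set w | c <= f w].
Proof.
move=> mf; have := mf measurableT `[c, +oo[%classic (measurable_itv _).
rewrite setTI; congr measurable; try by apply/seteqP; split => w /=; rewrite in_itv /= andbT.
Qed.

Lemma main_pos (R : realType) (d : measure_display) (T : measurableType d)
  (P : probability T R) (X : T -> R -> R) :
  is_FRV X -> forall A : R -> R, Med_s P X A ->
  forall a : R, 0 < a -> a <= 1 -> forall x, level A a x -> a <= medGr P X x.
Proof.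
move=> hX A hA a a0 a1 x hx.
have a01 : 0 <= a <= 1 by rewrite ltW.
case: hA => [[_ FcA] medA].
have [l [r [lr eA]]] := FcA a a01.
have [sA1 sAm] := suppf_itv eA lr.
pose U := fun w => suppf (X w) 1 a.
pose NL := fun w => suppf (X w) (-1) a.
pose L := fun w => - NL w.
have eX : forall w, level (X w) a = `[L w, U w]%classic /\ L w <= U w.
  move=> w; have [l' [r' [lr' e']]] := (hX.1 w).2 a a01.
  have [h1 h2] := suppf_itv e' lr'.
  by rewrite /L /NL /U h1 h2 opprK.
have mU : measurable_fun setT U.
  apply: meas_ge => c.
  rewrite [X in measurable X](_ : _ = \bigcup_(n in setT)
     [set w | level (X w) a `&` `[c, c + n%:R]%classic !=set0]).
    apply: bigcupT_measurable => n; apply: hX.2 => //.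
    by rewrite lerDl.
  apply/seteqP; split => w /=.
    move=> cU; exists (Num.bound (U w - c)) => //; exists (U w); split.
      by rewrite (eX w).1 /= in_itv /= (eX w).2 lexx.
    rewrite /= in_itv /= cU /= -lerBlDl; apply: ltW.
    exact: unstable.ltr_bound.
  move=> [n _ [v [hv hc]]]; move: hv hc; rewrite (eX w).1 /= !in_itv /=.
  by move=> /andP[_ vU] /andP[cv _]; exact: le_trans cv vU.
have mNL : measurable_fun setT NL.
  apply: meas_ge => c.
  rewrite [X in measurable X](_ : _ = \bigcup_(n in setT)
     [set w | level (X w) a `&` `[- c - n%:R, - c]%classic !=set0]).
    apply: bigcupT_measurable => n; apply: hX.2 => //.
    by rewrite gerBl.
  apply/seteqP; split => w /=.
    move=> cU; exists (Num.bound (NL w - c)) => //; exists (L w); split.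
      by rewrite (eX w).1 /= in_itv /= (eX w).2 lexx.
    rewrite /= in_itv /= /L lerN2 cU andbT.
    have := unstable.ltr_bound (NL w - c); lra.
  move=> [n _ [v [hv hc]]]; move: hv hc; rewrite (eX w).1 /= !in_itv /=.
  move=> /andP[Lv _] /andP[_ vc]; rewrite /L in Lv.
  lra.
have mL : measurable_fun setT L.
  by apply: measurableT_comp mNL; exact: measurable_realfun.oppr_measurable.
pose Y := L \max ((fun=> x) \min U).
have mY : measurable_fun setT Y.
  by apply: measurable_realfun.measurable_maxr => //; apply: measurable_realfun.measurable_minr.
have YX : forall w, a <= X w (Y w).
  move=> w; have : level (X w) a (Y w).
    rewrite (eX w).1 /= in_itv /= /Y /=.
    rewrite le_max lexx /= ge_max (eX w).2 /= ge_min lexx orbT //.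
  by rewrite /level gt_eqF.
have [xl xr] : l <= x /\ x <= r.
  by move: hx; rewrite eA /= in_itv /= => /andP[].
have MY : Med P Y x.
  have [_ mU2] := medA 1 a (or_intror erefl) a01.
  have [_ mL2] := medA (-1) a (or_introl erefl) a01.
  rewrite sA1 in mU2; rewrite sAm in mL2.
  split.
    apply: (le_trans mL2); apply: le_measure; rewrite ?inE.
    - exact: meas_ge_set.
    - exact: meas_le_set.
    move=> w /= h; rewrite /Y /= ge_max ge_min lexx /= andbT.
    rewrite /L /NL; move: h; rewrite /NL => h; match goal with |- ?G => idtac G end; lra.
  apply: (le_trans mU2); apply: le_measure; rewrite ?inE.
  - exact: meas_ge_set.
  - exact: meas_ge_set.
  move=> w /= h; rewrite /Y /= le_max le_min lexx /=.
  by rewrite (le_trans xr h) orbT.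
rewrite /medGr; set S := (X in sup X).
have hub : has_ubound S.
  exists 1 => _ [Z [_ _ ->]].
  apply: le_trans (ge_inf _ _) _.
  - by exists 0 => _ [w _ <-]; have /andP[] := (hX.1 w).1 (Z w).
  - by exists point.
  by have /andP[] := (hX.1 point).1 (Z point).
have hS : S (inf (range (fun w => X w (Y w)))).
  by exists Y; split.
apply: le_trans (ub_le_sup hub hS).
apply: lb_le_inf; first by exists (X point (Y point)), point.
by move=> _ [w _ <-]; exact: YX.
Qed.

Theorem proposition3p2 (R : realType) (d : measure_display) (T : measurableType d)
  (P : probability T R) (X : T -> R -> R) :
  is_FRV X ->
  forall A : R -> R, Med_s P X A ->
  forall a : R, 0 <= a <= 1 -> level A a `<=` level (medGr P X) a.
Proof.
move=> hX A hA a /andP[a0 a1] x.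
have [->|an0] := eqVneq a 0.
  rewrite /level eqxx; apply: closureS => y /= Ay.
  have /andP[_ Ay1] := hA.1.1 y.
  have := @main_pos _ _ _ P X hX A hA (A y) Ay Ay1 y.
  rewrite /level gt_eqF //= => /(_ (lexx _)) h.
  exact: lt_le_trans Ay h.
have a0' : 0 < a by rewrite lt_neqAle eq_sym an0 a0.
rewrite {2}/level (negbTE an0) => hx /=.
exact: (@main_pos _ _ _ P X hX A hA a a0' a1 x hx).
Qed.
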